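(* For $i=1,2$, let $[x^{(i)}_k]_{k=0}^N$ be a zero-mean nonsingular Gaussian Markov sequence obeying the forward Markov model $$x^{(i)}_k=M^{(i)}_{k,k-1}x^{(i)}_{k-1}+e^{M,(i)}_k,\ k\in[1,N],\qquad x^{(i)}_0=e^{M,(i)}_0,$$ where $[e^{M,(i)}_k]$ is a zero-mean white nonsingular Gaussian sequence with $\mathrm{Cov}(e^{M,(i)}_k)=M^{(i)}_k$. Then the two sequences share the same reciprocal model if and only if $$(M^{(1)}_k)^{-1}+(M^{(1)}_{k+1,k})'(M^{(1)}_{k+1})^{-1}M^{(1)}_{k+1,k}=(M^{(2)}_k)^{-1}+(M^{(2)}_{k+1,k})'(M^{(2)}_{k+1})^{-1}M^{(2)}_{k+1,k},\quad k\in[1,N-1],$$ and $$(M^{(1)}_{k+1,k})'(M^{(1)}_{k+1})^{-1}=(M^{(2)}_{k+1,k})'(M^{(2)}_{k+1})^{-1},\quad k\in[0,N-1].$$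
   Context: $[0,N]=(0,1,\ldots,N)$; $x=[x_0',\ldots,x_N']'$, $C=\mathrm{Cov}(x)$, $'$ denotes transpose. Every zero-mean nonsingular Gaussian Markov sequence is reciprocal and obeys a reciprocal model $R^0_kx_k-R^-_kx_{k-1}-R^+_kx_{k+1}=e^R_k$, $k\in[1,N-1]$, whose coefficients are determined by the block entries of $C^{-1}$: writing $A_k$ for the $(k,k)$ block and $B_k$ for the $(k,k+1)$ block of $C^{-1}$ (blocks indexed from $0$), $R^0_k=A_k$, $R^+_k=-B_k$, $R^-_k=-B_{k-1}'$. Two sequences share the same reciprocal model if these coefficients $R^0_k,R^-_k,R^+_k$, $k\in[1,N-1]$, coincide, i.e. their $C^{-1}$ have the same blocks $A_1,\ldots,A_{N-1}$ and $B_0,\ldots,B_{N-1}$. *)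

(* Defs.v *)
From HB Require Import structures.
From mathcomp Require Import all_boot all_order all_algebra.
Unset Printing Implicit Defensive.
Import Order.TTheory GRing.Theory Num.Theory.
Local Open Scope ring_scope.

(* State x_k in R^d, time indices k in [0,N] represented by 'I_N.+1.
   The stacked vector x = [x_0',...,x_N']' lives in R^((N+1)d); block
   matrices of that size are built with mxblock, all blocks being d x d. *)
Definition bdim (d N : nat) : 'I_N.+1 -> nat := fun _ => d.
Arguments bdim : clear implicits.

Notation bmx R d N := 'M[R]_(\sum_(i < N.+1) bdim d N i).

(* A forward Markov model is given by
     Mtr  k = M_{k,k-1}   (used for k in [1,N])
     Mcov k = M_k = Cov(e^M_k)   (used for k in [0,N]).
   Stacking: x = F x + e, i.e. (I - F) x = e, where F has the blocks
   M_{k,k-1} on its block subdiagonal. *)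
Definition IminusF {R : pzRingType} (d N : nat) (Mtr : nat -> 'M[R]_d)
  : bmx R d N :=
  mxblock (fun i j : 'I_N.+1 =>
    (if i == j then 1%:M else 0) - (if val i == (val j).+1 then Mtr (val i) else 0)
    : 'M[R]_(bdim d N i, bdim d N j)).

(* Cov(e) = blockdiag(M_0, ..., M_N) (white noise). *)
Definition covE {R : pzRingType} (d N : nat) (Mcov : nat -> 'M[R]_d)
  : bmx R d N :=
  mxblock (fun i j : 'I_N.+1 =>
    (if i == j then Mcov (val i) else 0) : 'M[R]_(bdim d N i, bdim d N j)).

Definition covx {R : comUnitRingType} (d N : nat) (Mtr Mcov : nat -> 'M[R]_d)
  : bmx R d N :=
  invmx (IminusF d N Mtr) *m covE d N Mcov *m (invmx (IminusF d N Mtr))^T.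

Definition precblock {R : comUnitRingType} (d N : nat) (Mtr Mcov : nat -> 'M[R]_d)
  (k l : nat) : 'M[R]_d :=
  submxblock (invmx (covx d N Mtr Mcov)) (inord k : 'I_N.+1) (inord l : 'I_N.+1).

Definition Ablk {R : comUnitRingType} d N (Mtr Mcov : nat -> 'M[R]_d) (k : nat) :=
  precblock d N Mtr Mcov k k.
Definition Bblk {R : comUnitRingType} d N (Mtr Mcov : nat -> 'M[R]_d) (k : nat) :=
  precblock d N Mtr Mcov k k.+1.

(* Two sequences share the same reciprocal model: the coefficients
   R^0_k = A_k, R^+_k = -B_k, R^-_k = -B_{k-1}' (k in [1,N-1]) coincide,
   i.e. (as stated in the paper's context) the blocks A_1..A_{N-1} and
   B_0..B_{N-1} of C^{-1} coincide. *)
Definition same_reciprocal_model {R : comUnitRingType} d N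
  (Mtr1 Mcov1 Mtr2 Mcov2 : nat -> 'M[R]_d) : Prop :=
  (forall k, (1 <= k < N)%N -> Ablk d N Mtr1 Mcov1 k = Ablk d N Mtr2 Mcov2 k) /\
  (forall k, (k < N)%N -> Bblk d N Mtr1 Mcov1 k = Bblk d N Mtr2 Mcov2 k).

Definition posdef {R : numDomainType} {d : nat} (A : 'M[R]_d) : Prop :=
  A^T = A /\ forall v : 'rV[R]_d, v != 0 -> 0 < (v *m A *m v^T) 0 0.

(* Main.v *)
Require Import Defs.
Set Warnings "-all".
From HB Require Import structures.
From mathcomp Require Import all_boot all_order all_algebra.
Import Order.TTheory GRing.Theory Num.Theory.
Local Open Scope ring_scope.
Lemma L_unit (R : fieldType) d N (Mtr : nat -> 'M[R]_d) : IminusF d N Mtr \in unitmx.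
Proof.
have trig : is_trig_mx (IminusF d N Mtr).
  apply/is_trig_mxblockP; split.
    move=> i j lt; have /negbTE -> : i != j by apply/eqP=> e; rewrite e ltnn in lt.
    by rewrite (ltn_eqF (leqW lt)) subr0.
  move=> i; rewrite eqxx (ltn_eqF (ltnSn _)) subr0; exact: scalar_mx_is_trig.
rewrite unitmxE (det_trig trig) big1 ?unitr1 // => s _.
rewrite /IminusF !mxE.
by rewrite eqxx (ltn_eqF (ltnSn _)) !mxE eqxx subr0.
Qed.
Lemma one_mxblock (R : pzRingType) d N :
  (1%:M : bmx R d N) = mxblock (fun i j : 'I_N.+1 =>
    (if i == j then 1%:M else 0) : 'M[R]_(bdim d N i, bdim d N j)).
Proof.
rewrite -(mxdiagZ (p_ := bdim d N) 1) /mxdiag; apply: eq_mxblock => i j.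
by case: eqP => // <-; rewrite conform_mx_id.
Qed.

Definition Dinv {R : comUnitRingType} d N (Mcov : nat -> 'M[R]_d) : bmx R d N :=
  mxblock (fun i j : 'I_N.+1 =>
    (if i == j then invmx (Mcov (val i)) else 0) : 'M_(bdim d N i, bdim d N j)).

Lemma covE_mul {R : fieldType} {d N} {Mcov : nat -> 'M[R]_d} :
  (forall k, (k <= N)%N -> Mcov k \in unitmx) ->
  covE d N Mcov *m Dinv d N Mcov = 1%:M.
Proof.
move=> hM.
  rewrite /covE /Dinv mul_mxblock one_mxblock; apply: eq_mxblock => i k.
  rewrite (bigD1 i) //= big1 => [|j /negbTE nij]; last by rewrite eq_sym nij mul0mx.
  rewrite eqxx addr0; case: eqP => [<-|_]; last by rewrite mulmx0.
  by rewrite mulmxV // hM // -ltnS.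
Qed.

Lemma covE_unit {R : fieldType} {d N} {Mcov : nat -> 'M[R]_d} :
  (forall k, (k <= N)%N -> Mcov k \in unitmx) ->
  covE d N Mcov \in unitmx.
Proof. by move=> hM; have [] := mulmx1_unit (covE_mul hM). Qed.

Lemma covE_inv {R : fieldType} {d N} {Mcov : nat -> 'M[R]_d} :
  (forall k, (k <= N)%N -> Mcov k \in unitmx) ->
  invmx (covE d N Mcov) = Dinv d N Mcov.
Proof.
move=> hM; have uD := covE_unit hM.
by rewrite -[RHS]mul1mx -(mulVmx uD) -mulmxA covE_mul // mulmx1.
Qed.

Lemma inv_uniq {R : comUnitRingType} {n} (A B : 'M[R]_n) : A *m B = 1%:M -> invmx A = B.
Proof.
move=> h; have [uA _] := mulmx1_unit h.
by rewrite -[RHS]mul1mx -(mulVmx uA) -mulmxA h mulmx1.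
Qed.

Lemma invmxM' {R : comUnitRingType} {n} (A B : 'M[R]_n) : A \in unitmx -> B \in unitmx ->
  invmx (A *m B) = invmx B *m invmx A.
Proof.
move=> uA uB; apply: inv_uniq.
by rewrite mulmxA -(mulmxA A) mulmxV // mulmx1 mulmxV.
Qed.

Definition Lb {R : pzRingType} d N (Mtr : nat -> 'M[R]_d) (i j : 'I_N.+1) : 'M[R]_d :=
  (if i == j then 1%:M else 0) - (if val i == (val j).+1 then Mtr (val i) else 0).

Lemma prec_blockE (R : fieldType) d N (Mtr Mcov : nat -> 'M[R]_d) :
  (forall k, (k <= N)%N -> Mcov k \in unitmx) -> forall i l : 'I_N.+1,
  submxblock (invmx (covx d N Mtr Mcov)) i l =
  \sum_m (Lb d N Mtr m i)^T *m invmx (Mcov (val m)) *m Lb d N Mtr m l.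
Proof.
move=> hM i l.
have uL := L_unit _ _ N Mtr.
have uD := covE_unit hM.
rewrite /covx !invmxM' ?unitmx_mul ?unitmx_tr ?unitmx_inv ?uL ?uD // -trmx_inv !invmxK.
rewrite covE_inv // /IminusF /Dinv tr_mxblock !mul_mxblock mxblockK.
apply: eq_bigr => j _; rewrite (bigD1 j) //= big1 => [|k /negbTE njk]; last by rewrite eq_sym njk mul0mx.
by rewrite eqxx addr0 mulmxA.
Qed.

Lemma trN {R : pzRingType} {m n} (A : 'M[R]_(m, n)) : (- A)^T = - A^T.
Proof. by apply/matrixP => i j; rewrite !mxE. Qed.

Lemma LbE {R : pzRingType} d N (Mtr : nat -> 'M[R]_d) (m i : 'I_N.+1) :
  Lb d N Mtr m i = if m == i then 1%:M else if val m == (val i).+1 then - Mtr (val m) else 0.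
Proof.
rewrite /Lb; case: eqP => [->|_]; first by rewrite (ltn_eqF (ltnSn _)) subr0.
by case: ifP => _; rewrite ?sub0r ?subr0 ?oppr0.
Qed.

Lemma sum2 {V : nmodType} {n} (f : 'I_n -> V) {a b} : a != b ->
  (forall m, m != a -> m != b -> f m = 0) -> \sum_m f m = f a + f b.
Proof.
move=> nab h; rewrite (bigD1 a) //= (bigD1 b) ?(eq_sym b) //= big1 ?addr0 //.
by move=> m /andP[ma mb]; exact: h.
Qed.

Lemma Ablk_eq (R : fieldType) d N (Mtr Mcov : nat -> 'M[R]_d) k :
  (forall k, (k <= N)%N -> Mcov k \in unitmx) -> (k < N)%N ->
  Ablk d N Mtr Mcov k = invmx (Mcov k) + (Mtr k.+1)^T *m invmx (Mcov k.+1) *m Mtr k.+1.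
Proof.
move=> hM kN; rewrite /Ablk /precblock prec_blockE //.
have ka : val (inord k : 'I_N.+1) = k by apply: inordK; rewrite ltnS ltnW.
have kb : val (inord k.+1 : 'I_N.+1) = k.+1 by apply: inordK.
have nab : (inord k : 'I_N.+1) != inord k.+1 by rewrite -(inj_eq val_inj) ka kb (ltn_eqF (ltnSn _)).
rewrite (sum2 _ nab) => [|m ma mb]; last first.
  rewrite LbE (negbTE ma) ka.
  have -> : (val m == k.+1) = false by apply/negbTE; apply: contra mb => /eqP e; apply/eqP/val_inj; rewrite kb.
  by rewrite trmx0 !mul0mx.
rewrite !LbE eqxx eq_sym (negbTE nab) ka kb eqxx trmx1 mul1mx mulmx1.
by rewrite trN mulNmx mulmxN mulNmx opprK.
Qed.

Lemma Bblk_eq (R : fieldType) d N (Mtr Mcov : nat -> 'M[R]_d) k :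
  (forall k, (k <= N)%N -> Mcov k \in unitmx) -> (k < N)%N ->
  Bblk d N Mtr Mcov k = - ((Mtr k.+1)^T *m invmx (Mcov k.+1)).
Proof.
move=> hM kN; rewrite /Bblk /precblock prec_blockE //.
have ka : val (inord k : 'I_N.+1) = k by apply: inordK; rewrite ltnS ltnW.
have kb : val (inord k.+1 : 'I_N.+1) = k.+1 by apply: inordK.
have nab : (inord k : 'I_N.+1) != inord k.+1 by rewrite -(inj_eq val_inj) ka kb (ltn_eqF (ltnSn _)).
rewrite (bigD1 (inord k.+1)) //= big1 => [|m mb]; last first.
  case: (eqVneq m (inord k)) => [->|ma].
    rewrite [Lb _ _ _ (inord k) (inord k.+1)]LbE (negbTE nab) ka kb.
    by rewrite (ltn_eqF (ltnW (ltnSn _))) mulmx0.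
  rewrite LbE (negbTE ma) ka.
  have -> : (val m == k.+1) = false by apply/negbTE; apply: contra mb => /eqP e; apply/eqP/val_inj; rewrite kb.
  by rewrite trmx0 !mul0mx.
rewrite !LbE eq_sym (negbTE nab) ka kb !eqxx mulmx1 addr0 trN mulNmx. have kb2 : nat_of_ord (inord k.+1 : 'I_N.+1) = k.+1 := kb. by rewrite kb2.
Qed.

Lemma posdef_unit {R : realFieldType} {d} (A : 'M[R]_d) : posdef A -> A \in unitmx.
Proof.
move=> [_ hp]; rewrite unitmxE unitfE; apply/negP => /det0P [v nz vA].
by have := hp v nz; rewrite vA mul0mx mxE ltxx.
Qed.

Theorem proposition4 (R : realFieldType) (d N : nat)
  (Mtr1 Mcov1 Mtr2 Mcov2 : nat -> 'M[R]_d) :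
  (forall k, (k <= N)%N -> posdef (Mcov1 k)) ->
  (forall k, (k <= N)%N -> posdef (Mcov2 k)) ->
  same_reciprocal_model d N Mtr1 Mcov1 Mtr2 Mcov2 <->
  ((forall k, (1 <= k < N)%N ->
      invmx (Mcov1 k) + (Mtr1 k.+1)^T *m invmx (Mcov1 k.+1) *m Mtr1 k.+1
      = invmx (Mcov2 k) + (Mtr2 k.+1)^T *m invmx (Mcov2 k.+1) *m Mtr2 k.+1) /\
   (forall k, (k < N)%N ->
      (Mtr1 k.+1)^T *m invmx (Mcov1 k.+1) = (Mtr2 k.+1)^T *m invmx (Mcov2 k.+1))).
Proof.
move=> h1 h2.
have u1 : forall k, (k <= N)%N -> Mcov1 k \in unitmx by move=> k hk; exact: posdef_unit (h1 k hk).
have u2 : forall k, (k <= N)%N -> Mcov2 k \in unitmx by move=> k hk; exact: posdef_unit (h2 k hk).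
split.
  move=> [hA hB]; split.
    move=> k hk; have kN : (k < N)%N by case/andP: hk.
    by have := hA k hk; rewrite !Ablk_eq.
  by move=> k kN; have := hB k kN; rewrite !Bblk_eq // => /oppr_inj.
move=> [hA hB]; split.
  move=> k hk; have kN : (k < N)%N by case/andP: hk.
  by rewrite !Ablk_eq // hA.
by move=> k kN; rewrite !Bblk_eq // hB.
Qed.
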